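(* Let $n\ge2$, $\preceq$ an admissible order on $L([0,1])$, $F\colon L([0,1])^2\to L([0,1])$, $G\colon L([0,1])^n\to L([0,1])$. The IV Sugeno-like $FG$-functional $\mathbf S_m^{F,G}$ is an $n$-dimensional IV aggregation function w.r.t. $\preceq$ for every IV fuzzy measure $m$ whenever: (i) $F(\cdot,\mathbf1)$ is non-decreasing, $F(\mathbf0,\mathbf1)=\mathbf0$, $F(\mathbf1,\mathbf1)=\mathbf1$, and $G=f\circ\mathrm{Proj}_1$ with $f\colon L([0,1])\to L([0,1])$ non-decreasing, $f(\mathbf0)=\mathbf0$, $f(\mathbf1)=\mathbf1$; or (ii) $F(\mathbf0,Y)=\mathbf0$ for all $Y\in L([0,1])$, $F(\mathbf1,\mathbf1)=\mathbf1$, $F$ is non-decreasing (in each variable), and $G=f\circ\vee$ with $f$ non-decreasing, $f(\mathbf0)=\mathbf0$, $f(\mathbf1)=\mathbf1$.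
   Context: $N=\{1,\dots,n\}$. $L([0,1])=\{[a,b]:0\le a\le b\le1\}$, $\mathbf0=[0,0]$, $\mathbf1=[1,1]$. An admissible order $\preceq$ is a total order on $L([0,1])$ with $[a,b]\preceq[c,d]$ whenever $a\le c$, $b\le d$. $\vee$ denotes maximum w.r.t. $\preceq$; monotonicity is w.r.t. $\preceq$; $\mathrm{Proj}_1(X_1,\dots,X_n)=X_1$. An $n$-dimensional IV aggregation function w.r.t. $\preceq$ is $M\colon L([0,1])^n\to L([0,1])$ with $M(\mathbf0,\dots,\mathbf0)=\mathbf0$, $M(\mathbf1,\dots,\mathbf1)=\mathbf1$, non-decreasing in each component w.r.t. $\preceq$. An IV fuzzy measure w.r.t. $\preceq$ is $m\colon2^N\to L([0,1])$, $m(\emptyset)=\mathbf0$, $m(N)=\mathbf1$, $m(A)\preceq m(B)$ for $A\subseteq B$. For a permutation $\sigma$, $E_{\sigma(i)}=\{\sigma(i),\dots,\sigma(n)\}$. $\mathbf S_m^{F,G}(X_1,\dots,X_n)=G\big(F(X_{\sigma(1)},m(E_{\sigma(1)})),\dots,F(X_{\sigma(n)},m(E_{\sigma(n)}))\big)$ with $\sigma$ any permutation such that $X_{\sigma(1)}\preceq\dots\preceq X_{\sigma(n)}$; it is defined when this value does not depend on the choice of $\sigma$ for all inputs. *)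

(* Defs.v *)
From HB Require Import structures.
From mathcomp Require Import all_boot all_order all_algebra all_fingroup.
From mathcomp Require Import reals.
Set Implicit Arguments. Unset Strict Implicit. Unset Printing Implicit Defensive.
Import Order.TTheory GRing.Theory Num.Theory.
Local Open Scope ring_scope.

Record ivl (R : realType) := Ivl {
  lo : R; hi : R;
  ivl_ok : [&& 0 <= lo, lo <= hi & hi <= 1] }.

Lemma ivl0_ok (R : realType) : [&& (0:R) <= 0, (0:R) <= 0 & (0:R) <= 1].
Proof. by rewrite lexx ler01. Qed.
Lemma ivl1_ok (R : realType) : [&& (0:R) <= 1, (1:R) <= 1 & (1:R) <= 1].
Proof. by rewrite lexx ler01. Qed.

Definition iv0 (R : realType) : ivl R := Ivl (ivl0_ok R).
Definition iv1 (R : realType) : ivl R := Ivl (ivl1_ok R).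

Definition admissible (R : realType) (le : ivl R -> ivl R -> bool) : Prop :=
  [/\ (forall x, le x x),
      (forall x y, le x y -> le y x -> x = y),
      (forall x y z, le x y -> le y z -> le x z),
      (forall x y, le x y || le y x) &
      (forall x y, lo x <= lo y -> hi x <= hi y -> le x y)].

Definition iv_aggregation (R : realType) (n : nat) (le : ivl R -> ivl R -> bool)
    (M : ('I_n -> ivl R) -> ivl R) : Prop :=
  [/\ M (fun _ => iv0 R) = iv0 R,
      M (fun _ => iv1 R) = iv1 R &
      (forall (X : 'I_n -> ivl R) (i : 'I_n) (y : ivl R), le (X i) y ->
         le (M X) (M (fun j => if j == i then y else X j)))].

Definition iv_fuzzy_measure (R : realType) (n : nat) (le : ivl R -> ivl R -> bool)
    (m : {set 'I_n} -> ivl R) : Prop :=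
  [/\ m set0 = iv0 R, m setT = iv1 R &
      (forall A B : {set 'I_n}, A \subset B -> le (m A) (m B))].

Definition sorting (R : realType) (n : nat) (le : ivl R -> ivl R -> bool)
    (X : 'I_n -> ivl R) (s : 'S_n) : Prop :=
  forall i j : 'I_n, (i <= j)%N -> le (X (s i)) (X (s j)).

Definition Eset (n : nat) (s : 'S_n) (i : 'I_n) : {set 'I_n} :=
  [set s j | j : 'I_n & (i <= j)%N].

Definition sugeno_val (R : realType) (n : nat)
    (F : ivl R -> ivl R -> ivl R) (G : ('I_n -> ivl R) -> ivl R)
    (m : {set 'I_n} -> ivl R) (X : 'I_n -> ivl R) (s : 'S_n) : ivl R :=
  G (fun i => F (X (s i)) (m (Eset s i))).

(* S_m^{F,G} is well defined (independent of the sorting permutation) and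
   M is the resulting function. *)
Definition sugeno_functional (R : realType) (n : nat) (le : ivl R -> ivl R -> bool)
    (F : ivl R -> ivl R -> ivl R) (G : ('I_n -> ivl R) -> ivl R)
    (m : {set 'I_n} -> ivl R) (M : ('I_n -> ivl R) -> ivl R) : Prop :=
  (forall X s1 s2, sorting le X s1 -> sorting le X s2 ->
      sugeno_val F G m X s1 = sugeno_val F G m X s2) /\
  (forall X s, sorting le X s -> M X = sugeno_val F G m X s).

Definition is_vmax (R : realType) (n : nat) (le : ivl R -> ivl R -> bool)
    (X : 'I_n -> ivl R) (Y : ivl R) : Prop :=
  (exists i, Y = X i) /\ (forall j, le (X j) Y).

(* Main.v *)
Require Import Defs.
From HB Require Import structures.
From mathcomp Require Import all_boot all_order all_algebra all_fingroup.
From mathcomp Require Import reals.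
Import Order.TTheory GRing.Theory Num.Theory.
Set Implicit Arguments. Unset Strict Implicit.

Lemma seq_max (T : Type) (I : eqType) (le : T -> T -> bool)
  (refl : forall x, le x x) (trans : forall x y z, le x y -> le y z -> le x z)
  (total : forall x y, le x y || le y x) (g : I -> T) (s : seq I) :
  s != [::] -> exists2 i, i \in s & forall j, j \in s -> le (g j) (g i).
Proof.
elim: s => [//|a s IH] _.
case: s IH => [|b s] IH.
  by exists a; rewrite ?inE // => j; rewrite inE => /eqP ->.
have [i iin ih] := IH isT.
case/orP: (total (g a) (g i)) => h.
- exists i; first by rewrite inE iin orbT.
  by move=> j; rewrite inE => /orP [/eqP ->|/ih].
- exists a; first by rewrite inE eqxx.
  move=> j; rewrite inE => /orP [/eqP ->|/ih hj]; first exact: refl.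
  exact: trans hj h.
Qed.

Definition amax (T : Type) (le : T -> T -> bool) (n : nat) (P : pred 'I_n)
  (g : 'I_n -> T) (d : 'I_n) : 'I_n :=
  odflt d [pick i | P i && [forall j, P j ==> le (g j) (g i)]].

Lemma amaxP (T : Type) (le : T -> T -> bool)
  (refl : forall x, le x x) (trans : forall x y z, le x y -> le y z -> le x z)
  (total : forall x y, le x y || le y x) (n : nat) (P : pred 'I_n)
  (g : 'I_n -> T) (d : 'I_n) : P d ->
  P (amax le P g d) /\ forall j, P j -> le (g j) (g (amax le P g d)).
Proof.
move=> Pd; rewrite /amax; case: pickP => [i /andP [Pi /forallP H]|H].
  by split => // j Pj; have := H j; rewrite Pj.
exfalso.
have [|i iin ih] := seq_max refl trans total g (s := [seq x <- enum 'I_n | P x]).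
  apply/eqP => e; have : d \in [seq x <- enum 'I_n | P x] by rewrite mem_filter Pd mem_enum.
  by rewrite e.
move: iin; rewrite mem_filter mem_enum andbT => Pi.
have := H i; rewrite Pi /=; move/negP; apply; apply/forallP => j; apply/implyP => Pj.
by apply: ih; rewrite mem_filter Pj mem_enum.
Qed.

Theorem corollary6 (R : realType) (n : nat) (hn : (2 <= n)%N)
    (le : ivl R -> ivl R -> bool) (F : ivl R -> ivl R -> ivl R)
    (G : ('I_n -> ivl R) -> ivl R) :
  admissible le ->
  ( (* (i) *)
    ((forall x y, le x y -> le (F x (iv1 R)) (F y (iv1 R))) /\
     F (iv0 R) (iv1 R) = iv0 R /\ F (iv1 R) (iv1 R) = iv1 R /\
     exists f : ivl R -> ivl R,
       (forall x y, le x y -> le (f x) (f y)) /\ f (iv0 R) = iv0 R /\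
       f (iv1 R) = iv1 R /\
       (forall X, G X = f (X (Ordinal (ltnW hn)))))
  \/ (* (ii) *)
    ((forall Y, F (iv0 R) Y = iv0 R) /\ F (iv1 R) (iv1 R) = iv1 R /\
     (forall x x' y, le x x' -> le (F x y) (F x' y)) /\
     (forall x y y', le y y' -> le (F x y) (F x y')) /\
     exists f : ivl R -> ivl R,
       (forall x y, le x y -> le (f x) (f y)) /\ f (iv0 R) = iv0 R /\
       f (iv1 R) = iv1 R /\
       (forall X Y, is_vmax le X Y -> G X = f Y)) ) ->
  forall m : {set 'I_n} -> ivl R, iv_fuzzy_measure le m ->
    exists M : ('I_n -> ivl R) -> ivl R,
      sugeno_functional le F G m M /\ iv_aggregation le M.
Proof.
move=> [refl antis trans total _] HFG m [m0 m1 mmon].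
set d : 'I_n := Ordinal (ltnW hn).
have frefl : forall x, (fun a b => le b a) x x by [].
have ftrans : forall x y z, (fun a b => le b a) x y -> (fun a b => le b a) y z ->
   (fun a b => le b a) x z by move=> x y z /= h1 h2; exact: trans h2 h1.
have ftotal : forall x y, (fun a b => le b a) x y || (fun a b => le b a) y x
  by move=> x y /=; rewrite orbC.
have Eall : forall s : 'S_n, Eset s d = setT.
  move=> s; apply/setP => k; rewrite inE; apply/imsetP; exists (s^-1 k)%g.
    by rewrite inE.
  by rewrite permKV.
case: HFG => [[F1 [F01 [F11 [f [fmon [f0 [f1 GX]]]]]]]|
              [F0 [F11 [Fm1 [Fm2 [f [fmon [f0 [f1 GX]]]]]]]]].
- pose amin (X : 'I_n -> ivl R) := amax (fun a b => le b a) predT X d.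
  have aminP X := amaxP frefl ftrans ftotal (P := predT) X (d := d) isT.
  have key : forall X (s : 'S_n), sorting le X s ->
      sugeno_val F G m X s = f (F (X (amin X)) (iv1 R)).
    move=> X s so; rewrite /sugeno_val GX Eall m1; congr (f (F _ _)).
    apply: antis; last by case: (aminP X) => _ /(_ (s d) isT).
    rewrite -[amin X](permKV s); exact: so.
  exists (fun X => f (F (X (amin X)) (iv1 R))); split.
    split; last by move=> X s so; rewrite key.
    by move=> X s1 s2 h1 h2; rewrite !key.
  split; [by rewrite F01 f0|by rewrite F11 f1|].
  move=> X i y h; apply: fmon; apply: F1.
  set X' := fun j => _.
  apply: (trans _ (X (amin X')) _).
    by case: (aminP X) => _ /(_ (amin X') isT).
  rewrite /X'; case: eqP => [->|_] //.
- pose U (X : 'I_n -> ivl R) j := [set k | le (X j) (X k)].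
  pose w (X : 'I_n -> ivl R) j := F (X j) (m (U X j)).
  pose jm X := amax le predT (w X) d.
  have jmP X := amaxP refl trans total (P := predT) (w X) (d := d) isT.
  have key : forall X (s : 'S_n), sorting le X s ->
      sugeno_val F G m X s = f (w X (jm X)).
    move=> X s so; rewrite /sugeno_val; apply: GX; split.
      set j := jm X.
      pose P := fun l : 'I_n => le (X j) (X (s l)).
      pose i := amax (fun a b : nat => (b <= a)%N) P (fun l => nat_of_ord l) (s^-1 j)%g.
      have Pd : P (s^-1 j)%g by rewrite /P permKV; exact: refl.
      have [Pi imin] := amaxP (T := nat) (le := fun a b : nat => (b <= a)%N)
           (@leqnn) (fun x y z h1 h2 => leq_trans h2 h1) (fun x y => leq_total y x)
           (P := P) (fun l => nat_of_ord l) (d := (s^-1 j)%g)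
           Pd.
      rewrite -/i in Pi imin.
      have EU : Eset s i = U X j.
        apply/setP => k; rewrite inE; apply/imsetP/idP.
          move=> [l]; rewrite inE => il ->; exact: trans Pi (so _ _ il).
        move=> h; exists (s^-1 k)%g; last by rewrite permKV.
        by rewrite inE; apply: imin; rewrite /P permKV.
      have Xe : X (s i) = X j.
        apply: antis => //.
        have := so i (s^-1 j)%g (imin _ Pd); by rewrite permKV.
      by exists i; rewrite /w EU Xe.
    move=> i; apply: (trans _ (w X (s i))); last by case: (jmP X) => _; apply.
    rewrite /w; apply: Fm2; apply: mmon; apply/subsetP => k /imsetP [l].
    rewrite inE => il ->; rewrite inE; exact: so.
  have mono : forall X X', (forall k, le (X k) (X' k)) ->
      le (w X (jm X)) (w X' (jm X')).
    move=> X X' hX; set j := jm X.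
    pose ks := amax (fun a b => le b a) (mem (U X j)) X' j.
    have jA : j \in U X j by rewrite inE; exact: refl.
    have [ksA ksmin] := amaxP frefl ftrans ftotal (P := mem (U X j)) X' (d := j) jA.
    rewrite -/ks in ksA ksmin.
    apply: (trans _ (w X' ks)); last by case: (jmP X') => _; apply.
    rewrite /w; apply: (trans _ (F (X' ks) (m (U X j)))).
      apply: Fm1; have h : le (X j) (X ks) by move: ksA; rewrite /= /U inE.
      exact: trans h (hX _).
    apply: Fm2; apply: mmon; apply/subsetP => k kA; rewrite inE; exact: ksmin.
  exists (fun X => f (w X (jm X))); split.
    split; last by move=> X s so; rewrite key.
    by move=> X s1 s2 h1 h2; rewrite !key.
  split.
  + by rewrite /w F0 f0.
  + rewrite /w /U /=.
    have -> : [set _ | le (iv1 R) (iv1 R)] = setT :> {set 'I_n}.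
      by apply/setP => k; rewrite !inE refl.
    by rewrite m1 F11 f1.
  + move=> X i y h; apply: fmon; apply: mono => k.
    by case: eqP => [->|_] //.
Qed.
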